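(* Let $P$ be a Poisson bracket on $\mathbb{R}^n$, let $\ast_\nu$ be a star-product on $(\mathbb{R}^n,P)$, and let $\odot_\nu$ be the sun-product associated to $\ast_\nu$, defined on $\mathsf{N}^0_\nu$. Then $\odot_\nu$ is an Abelian, associative product on $\mathsf{N}^0_\nu$; it is $\mathbb{R}$-bilinear but fails to be $\mathbb{R}[[\nu]]$-bilinear. Consequently $\mathsf{N}^0_\nu$ endowed with $\odot_\nu$ is an Abelian $\mathbb{R}$-algebra.
   Context: Let $\mathsf{N}=C^\infty(\mathbb{R}^n)$ (real-valued), with coordinates $x_1,\dots,x_n$, and $\mathsf{Pol}=\mathbb{R}[x_1,\dots,x_n]\subset\mathsf{N}$. For a formal parameter $\nu$, $\mathsf{N}_\nu=\mathsf{N}[[\nu]]$, and $\mathsf{N}^0_\nu\subset\mathsf{N}_\nu$ is the subalgebra of formal series whose $\nu^0$-coefficient lies in $\mathsf{Pol}$; $\pi:\mathsf{N}_\nu\to\mathsf{N}$ is the projection onto the $\nu^0$-coefficient. A (differential) star-product on $(\mathbb{R}^n,P)$ is a bilinear map $f\ast_\nu g=\sum_{r\ge0}\nu^rC_r(f,g)$ from $\mathsf{N}\times\mathsf{N}$ to $\mathsf{N}[[\nu]]$, extended $\mathbb{R}[[\nu]]$-bilinearly to $\mathsf{N}_\nu$, where the $C_r$ are bidifferential operators with: $C_0(f,g)=fg$; $C_r(c,f)=C_r(f,c)=0$ for $r\ge1$ and constants $c$; associativity $\sum_{s+t=r}C_s(C_t(f,g),h)=\sum_{s+t=r}C_s(f,C_t(g,h))$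 for all $r\ge0$; and $C_1(f,g)-C_1(g,f)=2P(f,g)$. Let $\mathcal{S}(\mathsf{Pol})$ be the symmetric tensor algebra over $\mathsf{Pol}$ with product $\otimes$, let $\lambda:\mathsf{Pol}\to\mathcal{S}(\mathsf{Pol})$ be the $\mathbb{R}$-algebra homomorphism with $\lambda(x_1^{k_1}\cdots x_n^{k_n})=x_1^{\otimes k_1}\otimes\cdots\otimes x_n^{\otimes k_n}$, and let $T_{\ast_\nu}:\mathcal{S}(\mathsf{Pol})\to\mathsf{N}^0_\nu$ be the $\mathbb{R}$-linear map with $T_{\ast_\nu}(I)=1$ ($I$ the unit of $\mathcal{S}(\mathsf{Pol})$) and $T_{\ast_\nu}(f_1\otimes\cdots\otimes f_k)=\frac1{k!}\sum_{\sigma\in S_k}f_{\sigma(1)}\ast_\nu\cdots\ast_\nu f_{\sigma(k)}$ for $f_i\in\mathsf{Pol}$. The sun-product associated to $\ast_\nu$ is $f\odot_\nu g=T_{\ast_\nu}(\lambda(\pi(f))\otimes\lambda(\pi(g)))$ for $f,g\in\mathsf{N}^0_\nu$. *)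

(* Defs.v *)
From HB Require Import structures.
From mathcomp Require Import all_boot all_order all_algebra all_fingroup.
From mathcomp Require Import all_classical all_reals all_analysis.
Set Implicit Arguments. Unset Strict Implicit. Unset Printing Implicit Defensive.
Import Order.TTheory GRing.Theory Num.Theory numFieldNormedType.Exports.
Local Open Scope ring_scope.

Section Defs.
Variables (R : realType) (n : nat).

Notation X := 'rV[R]_n.
Notation fn := (X -> R).

Definition iterD (s : seq 'I_n) (f : fn) : fn :=
  foldr (fun i g => fun x => 'D_(delta_mx 0 i) g x) f s.

Definition smooth (f : fn) : Prop :=
  forall s : seq 'I_n, continuous (iterD s f) /\
    forall (i : 'I_n) (x : X), derivable (iterD s f) x (delta_mx 0 i).

Definition mi_seq (k : nat) (a : {ffun 'I_n -> 'I_k}) : seq 'I_n :=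
  flatten [seq nseq (a i) i | i <- enum 'I_n].
Definition pdiff (k : nat) (a : {ffun 'I_n -> 'I_k}) (f : fn) : fn :=
  iterD (mi_seq a) f.

Definition bidifferential (B : fn -> fn -> fn) : Prop :=
  forall x0 : X, exists2 e : R, 0 < e &
    exists k : nat, exists c : {ffun 'I_n -> 'I_k} -> {ffun 'I_n -> 'I_k} -> fn,
      (forall a b, smooth (c a b)) /\
      forall f g : fn, smooth f -> smooth g ->
        forall x : X, ball x0 e x ->
          B f g x = \sum_(a : {ffun 'I_n -> 'I_k}) \sum_(b : {ffun 'I_n -> 'I_k})
                      c a b x * pdiff a f x * pdiff b g x.

Definition cst_fn (c : R) : fn := fun _ => c.

Definition is_poisson (P : fn -> fn -> fn) : Prop :=
  [/\ (forall f g, smooth f -> smooth g -> smooth (P f g)),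
      (forall (a b : R) f g h, smooth f -> smooth g -> smooth h ->
          P (a *: f + b *: g) h = a *: P f h + b *: P g h),
      (forall f g, smooth f -> smooth g -> P f g = - P g f),
      (forall f g h, smooth f -> smooth g -> smooth h ->
          P f (g * h) = P f g * h + g * P f h) &
      (forall f g h, smooth f -> smooth g -> smooth h ->
          P f (P g h) + P g (P h f) + P h (P f g) = 0)].

Definition is_star_product (P : fn -> fn -> fn) (C : nat -> fn -> fn -> fn)
  : Prop :=
  (forall r f g, smooth f -> smooth g -> smooth (C r f g)) /\
      (forall r, bidifferential (C r)) /\
      (forall r (a b : R) f g h, smooth f -> smooth g -> smooth h ->
          C r (a *: f + b *: g) h = a *: C r f h + b *: C r g h /\
          C r h (a *: f + b *: g) = a *: C r h f + b *: C r h g) /\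
      (forall f g, smooth f -> smooth g -> C 0%N f g = f * g) /\
      (forall r (c : R) f, (1 <= r)%N -> smooth f ->
          C r (cst_fn c) f = 0 /\ C r f (cst_fn c) = 0) /\
      (forall r f g h, smooth f -> smooth g -> smooth h ->
          \sum_(s < r.+1) C s (C (r - s) f g) h =
          \sum_(s < r.+1) C s f (C (r - s) g h)) /\
      (forall f g, smooth f -> smooth g -> C 1%N f g - C 1%N g f = 2%:R *: P f g).

(* a series is the sequence of its coefficients: F m is the nu^m-coefficient *)
Definition series := nat -> fn.

Definition Nnu (F : series) : Prop := forall m, smooth (F m).

(* polynomial functions  Pol  (l lists coefficient / exponent pairs) *)
Definition monomial (k : {ffun 'I_n -> nat}) : fn :=
  fun x => \prod_(i < n) (x ord0 i) ^+ (k i).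
Definition is_polyrep (l : seq (R * {ffun 'I_n -> nat})) (h : fn) : Prop :=
  h = fun x => \sum_(a <- l) a.1 * monomial a.2 x.
Definition Pol (h : fn) : Prop := exists l, is_polyrep l h.

Definition N0 (F : series) : Prop := Nnu F /\ Pol (F 0%N).

Definition proj (F : series) : fn := F 0%N.

Definition cser (f : fn) : series := fun m => if m is 0%N then f else 0.

Definition sadd (F G : series) : series := fun m => F m + G m.
Definition sscale (a : R) (F : series) : series := fun m => a *: F m.
Definition smul (a : nat -> R) (F : series) : series :=
  fun m => \sum_(i < m.+1) a i *: F (m - i)%N.

(* the star-product extended R[[nu]]-bilinearly to N_nu *)
Definition star (C : nat -> fn -> fn -> fn) (F G : series) : series :=
  fun m => \sum_(i < m.+1) \sum_(j < m.+1 | (i + j <= m)%N)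
             C (m - i - j)%N (F i) (G j).

Fixpoint starfold (C : nat -> fn -> fn -> fn) (s : seq fn) : series :=
  match s with
  | [::] => cser (cst_fn 1)
  | [:: f] => cser f
  | f :: s' => star C (cser f) (starfold C s')
  end.

(* Elements of S(Pol) are written as finite R-linear combinations of
   symmetric tensors f_1 (x) ... (x) f_k of polynomials; a combination is a
   list of (coefficient, [:: f_1; ...; f_k]); the empty sequence is I. *)
Definition tens := seq (R * seq fn).

Definition tens_mul (u v : tens) : tens :=
  [seq (a.1 * b.1, a.2 ++ b.2) | a <- u, b <- v].

Definition T_pure (C : nat -> fn -> fn -> fn) (s : seq fn) : series :=
  sscale ((size s)`!%:R^-1)
    (fun m => \sum_(sg : 'S_(size s))
       starfold C [seq nth 0 s (sg i) | i <- enum 'I_(size s)] m).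

Definition Tstar (C : nat -> fn -> fn -> fn) (u : tens) : series :=
  fun m => \sum_(a <- u) a.1 *: T_pure C a.2 m.

Definition coord (i : 'I_n) : fn := fun x => x ord0 i.

Definition lam_mono (k : {ffun 'I_n -> nat}) : seq fn :=
  flatten [seq nseq (k i) (coord i) | i <- enum 'I_n].

(* lambda extended R-linearly; a polynomial function h is expanded along a
   chosen coefficient representation *)
Definition lam (h : fn) : tens :=
  [seq (a.1, lam_mono a.2) | a <- xget [::] (fun l => is_polyrep l h)].

Definition sun (C : nat -> fn -> fn -> fn) (F G : series) : series :=
  Tstar C (tens_mul (lam (proj F)) (lam (proj G))).

End Defs.

(* Main.v *)
Require Import Defs.
From HB Require Import structures.
From mathcomp Require Import all_boot all_order all_algebra all_fingroup.
From mathcomp Require Import all_classical all_reals all_analysis.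
From Stdlib Require Import Lia.
From mathcomp Require Import zify.
Import Order.TTheory GRing.Theory Num.Theory numFieldNormedType.Exports.
Local Open Scope ring_scope.

Local Open Scope classical_set_scope.
Set Implicit Arguments. Unset Strict Implicit.

Section Smooth.
Variables (R : realType) (n : nat).
Notation fn := ('rV[R]_n -> R).

Lemma iterD_lin (a b : R) (f g : fn) : smooth f -> smooth g ->
  forall s : seq 'I_n, Defs.iterD s (a *: f + b *: g) = a *: Defs.iterD s f + b *: Defs.iterD s g.
Proof.
move=> sf sg; elim=> [//|i s IH] /=.
apply/funext => x; rewrite IH.
have [_ df] := sf s; have [_ dg] := sg s.
rewrite deriveD ?deriveZ //; [exact: derivableZ|exact: derivableZ].
Qed.

Lemma smooth_lin (a b : R) (f g : fn) : smooth f -> smooth g ->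
  smooth (a *: f + b *: g).
Proof.
move=> sf sg s; rewrite (iterD_lin a b sf sg s).
have [cf df] := sf s; have [cg dg] := sg s; split.
  move=> x; apply: continuousD; apply: continuousZl_tmp; [exact: cf|exact: cg].
move=> i x; apply: derivableD; apply: derivableZ; [exact: df|exact: dg].
Qed.

Lemma iterD_cst (c : R) (s : seq 'I_n) : exists c', Defs.iterD s (@cst_fn R n c) = cst c'.
Proof.
elim: s => [|i s [c' IH]] /=; first by exists c.
exists 0; apply/funext => x; rewrite IH; exact: derive_cst.
Qed.

Lemma smooth_cst (c : R) : smooth (@cst_fn R n c).
Proof.
move=> s; have [c' ->] := iterD_cst c s; split.
  exact: cst_continuous.
move=> i x; exact: derivable_cst.
Qed.

Lemma smooth0 : smooth (0 : fn).
Proof. have -> : (0 : fn) = cst_fn 0 by []. exact: smooth_cst. Qed.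

Lemma smoothD (f g : fn) : smooth f -> smooth g -> smooth (f + g).
Proof.
move=> sf sg; have := smooth_lin 1 1 sf sg.
by rewrite !scale1r.
Qed.

Lemma smoothZ (a : R) (f : fn) : smooth f -> smooth (a *: f).
Proof.
move=> sf; have := smooth_lin a 0 sf sf.
by rewrite scale0r addr0.
Qed.

Lemma smooth_sum (I : Type) (r : seq I) (P : pred I) (F : I -> fn) :
  (forall i, P i -> smooth (F i)) -> smooth (\sum_(i <- r | P i) F i).
Proof.
move=> H; elim/big_rec: _ => [|i x Pi Hx]; first exact: smooth0.
exact: smoothD (H _ Pi) Hx.
Qed.

Lemma derive_coord (i : 'I_n) (x v : 'rV[R]_n) :
  (fun h : R => h^-1 *: ((@Defs.coord R n i \o shift x) (h *: v) - Defs.coord i x)) @ 0^'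
    --> v ord0 i.
Proof.
apply: cvg_near_cst; near=> h.
rewrite /Defs.coord /=.
rewrite !mxE addrK.
have hn0 : h != 0 by near: h; exact: nbhs_dnbhs_neq.
by rewrite [_ *: _]/GRing.scale /= mulKf.
Unshelve. all: by end_near.
Qed.

Lemma iterD_coord (i : 'I_n) (s : seq 'I_n) :
  s = [::] \/ exists c, Defs.iterD s (@Defs.coord R n i) = cst c.
Proof.
elim: s => [|j s [->|[c IH]]]; [by left| right|right].
  exists ((delta_mx 0 j : 'rV[R]_n) ord0 i).
  apply/funext => x; apply: cvg_lim; first exact: Rhausdorff.
  exact: derive_coord.
by exists 0; apply/funext => x /=; rewrite IH; exact: derive_cst.
Qed.

Lemma smooth_coord (i : 'I_n) : smooth (@Defs.coord R n i).
Proof.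
move=> s; case: (iterD_coord i s) => [->|[c ->]].
  split; last by move=> k x; apply/cvg_ex; eexists; exact: derive_coord.
  move=> x; exact: (@coord_continuous R 1 n ord0 i x).
split; [exact: cst_continuous|move=> k x; exact: derivable_cst].
Qed.

End Smooth.

Set Implicit Arguments. Unset Strict Implicit.

Section Star.
Variables (R : realType) (n : nat).
Notation fn := ('rV[R]_n -> R).
Variable C : nat -> fn -> fn -> fn.
Hypothesis Csm : forall r f g, smooth f -> smooth g -> smooth (C r f g).
Hypothesis C0 : forall f g, smooth f -> smooth g -> C 0%N f g = f * g.

Fixpoint sm_list (s : seq fn) : Prop :=
  if s is f :: s' then smooth f /\ sm_list s' else True.

Lemma sm_list_nth (s : seq fn) j : sm_list s -> smooth (nth 0 s j).
Proof.
elim: s j => [|f s IH] [|j] /=; try by move=> _; exact: smooth0.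
  by case.
by case=> _; exact: IH.
Qed.

Lemma sm_list_map (I : Type) (g : I -> fn) (l : seq I) :
  (forall i, smooth (g i)) -> sm_list (map g l).
Proof. by move=> H; elim: l => //= i l ->; split. Qed.

Lemma sm_list_cat (s t : seq fn) : sm_list s -> sm_list t -> sm_list (s ++ t).
Proof. by elim: s => //= f s IH [? ?] ?; split => //; apply: IH. Qed.


Lemma smooth_star (F G : Defs.series R n) : (forall m, smooth (F m)) ->
  (forall m, smooth (G m)) -> forall m, smooth (star C F G m).
Proof.
move=> sF sG m; rewrite /star; apply: smooth_sum => i _.
apply: smooth_sum => j _; exact: Csm.
Qed.

Lemma smooth_cser (f : fn) : smooth f -> forall m, smooth (cser f m).
Proof. by move=> sf [|m] //=; exact: smooth0. Qed.

Lemma star0 (F G : Defs.series R n) : smooth (F 0%N) -> smooth (G 0%N) ->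
  star C F G 0%N = F 0%N * G 0%N.
Proof.
move=> sF sG; rewrite /star big_ord1 big_ord1_cond /=.
by rewrite C0.
Qed.

Lemma smooth_starfold (s : seq fn) : sm_list s ->
  forall m, smooth (starfold C s m).
Proof.
elim: s => [|f [|g s] IH] Hs m /=.
- by apply: smooth_cser; exact: smooth_cst.
- by apply: smooth_cser; case: Hs.
- case: Hs => sf Hs.
  apply: smooth_star => [k|k]; first by apply: smooth_cser.
  exact: IH.
Qed.

Lemma starfold0 (s : seq fn) : sm_list s ->
  starfold C s 0%N = fun x => \prod_(f <- s) f x.
Proof.
elim: s => [|f [|g s] IH] Hs /=.
- by apply/funext => x; rewrite big_nil.
- by apply/funext => x; rewrite big_seq1.
- case: Hs => sf Hs'.
  have Hg : sm_list (g :: s) := Hs'.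
  rewrite star0 //; last exact: (smooth_starfold Hg 0%N).
  by rewrite [starfold _ (g :: s)]/= in IH; rewrite /= IH //; apply/funext => x; rewrite big_cons.
Qed.


Definition Tp k (f : nat -> fn) : Defs.series R n :=
  sscale (k`!%:R^-1)
    (fun m => \sum_(sg : 'S_k) starfold C [seq f (sg i : nat) | i <- enum 'I_k] m).

Lemma T_pureE s : T_pure C s = Tp (size s) (nth 0 s).
Proof. by []. Qed.

Lemma Tp_ext k (f g : nat -> fn) : (forall j, (j < k)%N -> f j = g j) -> Tp k f = Tp k g.
Proof.
move=> H; rewrite /Tp; congr sscale; apply/funext => m.
apply: eq_bigr => sg _; congr (starfold C _ m).
by apply: eq_map => i; apply: H.
Qed.

Lemma Tp_perm k (f g : nat -> fn) (t : 'S_k) : (forall i : 'I_k, g i = f (t i)) ->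
  Tp k g = Tp k f.
Proof.
move=> H; rewrite /Tp; congr sscale; apply/funext => m.
rewrite [RHS](reindex_inj (mulIg t)) /=.
apply: eq_bigr => sg _; congr (starfold C _ m).
by apply: eq_map => i; rewrite H permM.
Qed.

Lemma T_pure_perm (g : nat -> fn) (s t : seq nat) : perm_eq s t ->
  T_pure C (map g s) = T_pure C (map g t).
Proof.
move=> pst; rewrite !T_pureE !size_map -(perm_size pst).
rewrite (@Tp_ext _ _ (g \o nth 0%N s)); last first.
  by move=> j lt; rewrite (nth_map 0%N).
rewrite [RHS](@Tp_ext _ _ (g \o nth 0%N t)); last first.
  by move=> j lt; rewrite (nth_map 0%N) // -(perm_size pst).
have pts : perm_eq t (in_tuple s) by rewrite perm_sym.
case/tuple_permP: pts => p Et.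
symmetry; apply: (Tp_perm (t := p)) => i /=.
rewrite Et -(tnth_nth 0%N [tuple tnth (in_tuple s) (p i0) | i0 < size s]).
by rewrite tnth_mktuple (tnth_nth 0%N).
Qed.

Lemma smooth_T_pure s : sm_list s -> forall m, smooth (T_pure C s m).
Proof.
move=> Hs m; rewrite /T_pure /sscale; apply: smoothZ.
apply: smooth_sum => sg _; apply: smooth_starfold.
apply: sm_list_map => i; exact: sm_list_nth.
Qed.

Lemma T_pure0 s : sm_list s -> T_pure C s 0%N = fun x => \prod_(f <- s) f x.
Proof.
move=> Hs; rewrite /T_pure /sscale.
have E : forall sg : 'S_(size s),
  starfold C [seq nth 0 s (sg i) | i <- enum 'I_(size s)] 0%N =
  fun x => \prod_(f <- s) f x.
  move=> sg; rewrite starfold0; last first.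
    apply: sm_list_map => i; exact: sm_list_nth.
  apply/funext => x; rewrite big_map big_enum /=.
  rewrite (big_nth 0) big_mkord.
  rewrite [RHS](reindex_inj (@perm_inj _ sg)) /=.
  by apply: eq_bigr.
rewrite (eq_bigr _ (fun sg _ => E sg)) sumr_const card_Sn.
rewrite natmulfctE; apply/funext => x; rewrite scalrfctE /= -(mulr_natl (\prod_(f <- s) f x)).
have -> : forall a b : R, a *: b = a * b by [].
rewrite mulrA mulVf ?mul1r //.
Qed.

End Star.

Set Implicit Arguments. Unset Strict Implicit.

Lemma combine_keys (R : pzRingType) (V : lmodType R) (K : eqType)
  (Phi : K -> V) (l : seq (R * K)) :
  (forall k, \sum_(a <- l | a.2 == k) a.1 = 0) ->
  \sum_(a <- l) a.1 *: Phi a.2 = 0.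
Proof.
move=> H; set Ks := undup (map snd l).
have E : forall a, a \in l ->
    \sum_(k <- Ks) (if a.2 == k then a.1 *: Phi k else 0) = a.1 *: Phi a.2.
  move=> a al; have ak : a.2 \in Ks by rewrite mem_undup; apply: map_f.
  rewrite (bigD1_seq a.2) //= ?undup_uniq // eqxx big1 ?addr0 // => k.
  by rewrite eq_sym => /negbTE ->.
rewrite big_seq (eq_bigr _ (fun a al => esym (E a al))) -big_seq.
rewrite exchange_big /= big1 // => k _.
rewrite -big_mkcond /=.
have -> : \sum_(a <- l | a.2 == k) a.1 *: Phi k = \sum_(a <- l | a.2 == k) a.1 *: Phi a.2.
  by apply: eq_bigr => a /eqP ->.
rewrite (eq_bigr (fun a => a.1 *: Phi k)); last by move=> a /eqP ->.
by rewrite -scaler_suml H scale0r.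
Qed.

Lemma digits_bound (D m : nat) (f : nat -> nat) :
  (forall i, (i < m)%N -> (f i < D)%N) ->
  (\sum_(i < m) D ^ i * f i < D ^ m)%N.
Proof.
elim: m => [|m IH] H; first by rewrite big_ord0 expn0.
rewrite big_ord_recr /= expnS.
have h1 := IH (fun i lt => H i (ltnW lt)).
have h2 := H m (ltnSn m).
set S := (\sum_(i < m) _)%N in h1 *.
set P := (D ^ m)%N in h1 *.
nia.
Qed.

Lemma digits_inj (D m : nat) (f g : nat -> nat) :
  (forall i, (i < m)%N -> (f i < D)%N) ->
  (forall i, (i < m)%N -> (g i < D)%N) ->
  (\sum_(i < m) D ^ i * f i)%N = (\sum_(i < m) D ^ i * g i)%N ->
  forall i, (i < m)%N -> f i = g i.
Proof.
elim: m => [|m IH] Hf Hg E i lti //.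
move: E; rewrite !big_ord_recr /=.
have bf := digits_bound (fun i lt => Hf i (ltnW lt)).
have bg := digits_bound (fun i lt => Hg i (ltnW lt)).
set Sf := (\sum_(i < m) _)%N in bf *.
set Sg := (\sum_(i < m) _)%N in bg *.
move=> E.
have ES : Sf = Sg.
  have := congr1 (fun x => x %% D ^ m)%N E.
  rewrite ![(_ + D ^ m * _)%N]addnC ![(D ^ m * _)%N]mulnC !modnMDl.
  by rewrite !modn_small.
have D0 : (0 < D)%N by have := Hf m (ltnSn m); lia.
have EM : f m = g m.
  rewrite ES in E; move/addnI: E => /eqP.
  by rewrite eqn_pmul2l ?expn_gt0 ?D0 // => /eqP.
rewrite ltnS leq_eqVlt in lti; case/orP: lti => [/eqP -> //|lti].
exact: (IH (fun i lt => Hf i (ltnW lt)) (fun i lt => Hg i (ltnW lt)) ES).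
Qed.

Lemma poly_vanish (R : realType) (p : {poly R}) :
  (forall t, p.[t] = 0) -> p = 0.
Proof.
move=> H; apply/eqP; apply: contraT => p0.
have := max_poly_roots p0 (rs := [seq i%:R | i <- iota 0 (size p)]).
rewrite size_map size_iota ltnn; apply.
  by apply/allP => x _; apply/rootP; exact: H.
rewrite map_inj_uniq ?iota_uniq // => i j /eqP.
by rewrite eqr_nat => /eqP.
Qed.

Section Indep.
Variables (R : realType) (n : nat).
Notation fn := ('rV[R]_n -> R).
Notation mon := {ffun 'I_n -> nat}.

Lemma indep (l : seq (R * mon)) :
  (forall x, \sum_(a <- l) a.1 * monomial a.2 x = 0) ->
  forall k, \sum_(a <- l | a.2 == k) a.1 = 0.
Proof.
move=> H k.
set D := (\max_(a <- l) \max_(i < n) a.2 i).+1.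
have bnd : forall a, a \in l -> forall i, (a.2 i < D)%N.
  move=> a al i; rewrite ltnS.
  have h1 : (a.2 i <= \max_(i < n) a.2 i)%N by apply: (@leq_bigmax_cond _ xpredT (fun i : 'I_n => a.2 i) i).
  have h2 := @leq_bigmax_seq _ l xpredT (fun a : R * mon => \max_(i < n) a.2 i) a al isT.
  exact: leq_trans h1 h2.
pose N (k : mon) := (\sum_(i < n) D ^ i * k i)%N.
pose p := \sum_(a <- l) a.1 *: 'X^(N a.2).
have p0 : p = 0.
  apply: poly_vanish => t.
  rewrite /p horner_sum -[RHS](H (\row_(i < n) t ^+ (D ^ i))).
  apply: eq_bigr => a _.
  rewrite hornerZ hornerXn /monomial; congr (_ * _).
  rewrite -prodrXr; apply: eq_bigr => i _.
  by rewrite mxE exprM.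
have Ninj : forall k1 k2 : mon, (forall i, (k1 i < D)%N) -> (forall i, (k2 i < D)%N) ->
    N k1 = N k2 -> k1 = k2.
  move=> k1 k2 b1 b2 E; apply/ffunP => i.
  pose f1 j := if (insub j : option 'I_n) is Some o then k1 o else 0%N.
  pose f2 j := if (insub j : option 'I_n) is Some o then k2 o else 0%N.
  have F1 : forall o : 'I_n, f1 o = k1 o by move=> o; rewrite /f1 valK.
  have F2 : forall o : 'I_n, f2 o = k2 o by move=> o; rewrite /f2 valK.
  rewrite -F1 -F2; apply: (@digits_inj D n) => //.
  - by move=> j lj; rewrite /f1 insubT.
  - by move=> j lj; rewrite /f2 insubT.
  - rewrite /N in E.
    rewrite (eq_bigr (fun o : 'I_n => D ^ o * f1 o)%N) in E; last by move=> o _; rewrite F1.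
    rewrite [X in _ = X](eq_bigr (fun o : 'I_n => D ^ o * f2 o)%N) in E; last by move=> o _; rewrite F2.
    exact: E.
have := congr1 (fun q : {poly R} => q`_(N k)) p0.
rewrite /p coef_sum coef0 => E.
case: (boolP [forall i, k i < D]%N) => [/forallP kb|].
  rewrite -[RHS]E big_mkcond /=; apply: eq_big_seq => a al.
  rewrite coefZ coefXn.
  case: (eqVneq a.2 k) => [->|ne]; first by rewrite eqxx mulr1.
  case: (eqVneq (N k) (N a.2)) => [E2|]; last by rewrite mulr0.
  by move: ne; rewrite (Ninj _ _ (bnd a al) kb (esym E2)) eqxx.
move=> /forallPn [i ki]; rewrite big_seq_cond big1 // => a /andP [al /eqP ak].
by move: ki; rewrite -ak bnd.
Qed.

End Indep.

Set Implicit Arguments. Unset Strict Implicit.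

Section Tens.
Variables (R : realType) (n : nat).
Notation fn := ('rV[R]_n -> R).
Notation mon := {ffun 'I_n -> nat}.
Variable C : nat -> fn -> fn -> fn.

Lemma Tstar_mul (u v : tens R n) m : Tstar C (tens_mul u v) m =
  \sum_(a <- u) \sum_(b <- v) (a.1 * b.1) *: T_pure C (a.2 ++ b.2) m.
Proof. by rewrite /Tstar /tens_mul big_allpairs_dep. Qed.

Lemma T_pure_catC (s t : seq fn) : T_pure C (s ++ t) = T_pure C (t ++ s).
Proof.
set g := nth 0 (s ++ t).
have E1 : s ++ t = map g (iota 0 (size s + size t)).
  by rewrite -size_cat; symmetry; exact: mkseq_nth.
have E2 : t ++ s = map g (iota (size s) (size t) ++ iota 0 (size s)).
  rewrite map_cat; congr (_ ++ _).
    symmetry; rewrite -[size s]addn0 iotaDl -map_comp.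
    transitivity (mkseq (nth 0 t) (size t)); last exact: mkseq_nth.
    apply: eq_map => i /=; rewrite /g nth_cat.
    by rewrite ltnNge leq_addr /= addKn.
  symmetry; transitivity (mkseq (nth 0 s) (size s)); last exact: mkseq_nth.
  apply/eq_in_map => i.
  by rewrite mem_iota add0n /g nth_cat => /andP [_ ->].
rewrite E1 E2; apply: T_pure_perm.
by rewrite iotaD add0n perm_catC.
Qed.

Lemma Tstar_comm (u v : tens R n) : Tstar C (tens_mul u v) = Tstar C (tens_mul v u).
Proof.
apply/funext => m; rewrite !Tstar_mul exchange_big; apply: eq_bigr => b _.
by apply: eq_bigr => a _; rewrite mulrC T_pure_catC.
Qed.

Definition nidx (k : mon) : seq nat :=
  flatten [seq nseq (k i) (i : nat) | i <- enum 'I_n].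

Definition coordn (j : nat) : fn :=
  if (insub j : option 'I_n) is Some i then Defs.coord i else 0.

Lemma lam_monoE (k : mon) : lam_mono R k = map coordn (nidx k).
Proof.
rewrite /lam_mono /nidx map_flatten -map_comp; congr flatten.
by apply: eq_map => i /=; rewrite map_nseq /coordn valK.
Qed.

Lemma smooth_coordn j : smooth (coordn j).
Proof.
rewrite /coordn; case: (insub j) => [i|]; [exact: smooth_coord|exact: smooth0].
Qed.

Lemma sm_lam_mono (k : mon) : sm_list (lam_mono R k).
Proof. rewrite lam_monoE; apply: sm_list_map; exact: smooth_coordn. Qed.

Lemma iter_mul (a : R) k : iter k (GRing.mul a) 1 = a ^+ k.
Proof. by elim: k => [|k IH] //=; rewrite IH exprS. Qed.

Lemma prod_lam_mono (k : mon) x : \prod_(f <- lam_mono R k) f x = monomial k x.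
Proof.
rewrite /lam_mono big_flatten big_map big_enum /= /monomial.
apply: eq_bigr => i _; rewrite big_nseq iter_mul //.
Qed.

Definition lamL (l : seq (R * mon)) : tens R n := [seq (a.1, lam_mono R a.2) | a <- l].

Definition Phi (u : tens R n) m (k : mon) : fn :=
  \sum_(b <- u) b.1 *: T_pure C (lam_mono R k ++ b.2) m.

Lemma Tstar_lamL l u m :
  Tstar C (tens_mul (lamL l) u) m = \sum_(a <- l) a.1 *: Phi u m a.2.
Proof.
rewrite Tstar_mul big_map; apply: eq_bigr => a _.
by rewrite /Phi scaler_sumr; apply: eq_bigr => b _; rewrite scalerA.
Qed.

Lemma rep_WD (V : lmodType R) (F : mon -> V) (l l' : seq (R * mon)) (h : fn) :
  is_polyrep l h -> is_polyrep l' h ->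
  \sum_(a <- l) a.1 *: F a.2 = \sum_(a <- l') a.1 *: F a.2.
Proof.
move=> El El'.
set d := l ++ [seq (- a.1, a.2) | a <- l'].
have d0 : forall x, \sum_(a <- d) a.1 * monomial a.2 x = 0.
  move=> x; rewrite big_cat big_map /=.
  have -> : \sum_(a <- l) a.1 * monomial a.2 x = h x by rewrite El.
  have -> : \sum_(a <- l') - a.1 * monomial a.2 x = - h x.
    by rewrite El' /= -sumrN; apply: eq_bigr => a _; rewrite mulNr.
  by rewrite subrr.
have := combine_keys F (indep d0).
rewrite big_cat big_map /=.
under [X in _ + X = _]eq_bigr do rewrite scaleNr.
by rewrite sumrN => /eqP; rewrite subr_eq0 => /eqP.
Qed.

Lemma Tstar_WD (l l' : seq (R * mon)) (h : fn) (u : tens R n) :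
  is_polyrep l h -> is_polyrep l' h ->
  Tstar C (tens_mul (lamL l) u) = Tstar C (tens_mul (lamL l') u).
Proof.
move=> El El'; apply/funext => m; rewrite !Tstar_lamL.
exact: rep_WD El El'.
Qed.

Lemma lamE (h : fn) : lam h = lamL (xget [::] (fun l => is_polyrep l h)).
Proof. by []. Qed.

Lemma lam_rep (h : fn) : Pol h -> is_polyrep (xget [::] (fun l => is_polyrep l h)) h.
Proof. by move=> Ph; exact: (xgetPex [::] Ph). Qed.

Definition mulrep (l l' : seq (R * mon)) : seq (R * mon) :=
  [seq (a.1 * b.1, [ffun i => (a.2 i + b.2 i)%N] : mon) | a : R * mon <- l, b : R * mon <- l'].

Lemma monomialD (k k' : mon) (x : 'rV[R]_n) :
  monomial [ffun i => (k i + k' i)%N] x = monomial k x * monomial k' x.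
Proof.
rewrite /monomial -big_split /=; apply: eq_bigr => i _.
by rewrite ffunE exprD.
Qed.

Lemma is_polyrep_mul l l' (p q : fn) :
  is_polyrep l p -> is_polyrep l' q -> is_polyrep (mulrep l l') (p * q).
Proof.
move=> -> ->; rewrite /is_polyrep; apply/funext => x /=.
rewrite /mulrep big_allpairs_dep mulrfctE /= mulr_suml; apply: eq_bigr => a _.
rewrite mulr_sumr; apply: eq_bigr => b _.
by rewrite monomialD mulrACA.
Qed.

Definition addrep (a b : R) (l l' : seq (R * mon)) : seq (R * mon) :=
  [seq (a * c.1, c.2) | c <- l] ++ [seq (b * c.1, c.2) | c <- l'].

Lemma is_polyrep_add a b l l' (p q : fn) :
  is_polyrep l p -> is_polyrep l' q -> is_polyrep (addrep a b l l') (a *: p + b *: q).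
Proof.
move=> -> ->; rewrite /is_polyrep; apply/funext => x /=.
rewrite /addrep big_cat !big_map /= addrfctE !scalrfctE /=.
have sE : forall u v : R, u *: v = u * v by [].
rewrite !sE; congr (_ + _); rewrite mulr_sumr; apply: eq_bigr => c _; exact: mulrA.
Qed.

Lemma nidx_add (k k' : mon) :
  perm_eq (nidx [ffun i => (k i + k' i)%N]) (nidx k ++ nidx k').
Proof.
apply/seq.permP => P; rewrite count_cat /nidx !count_flatten !sumnE !big_map.
rewrite -big_split /=; apply: eq_bigr => i _.
by rewrite !count_nseq ffunE mulnDr.
Qed.

End Tens.

Set Implicit Arguments. Unset Strict Implicit.

Section Sun.
Variables (R : realType) (n : nat).
Notation fn := ('rV[R]_n -> R).
Notation mon := {ffun 'I_n -> nat}.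
Variable C : nat -> fn -> fn -> fn.
Hypothesis Csm : forall r f g, smooth f -> smooth g -> smooth (C r f g).
Hypothesis C0 : forall f g, smooth f -> smooth g -> C 0%N f g = f * g.

Lemma Tstar_LL (l l' : seq (R * mon)) m :
  Tstar C (tens_mul (lamL l) (lamL l')) m =
  \sum_(a <- l) \sum_(b <- l') (a.1 * b.1) *: T_pure C (lam_mono R a.2 ++ lam_mono R b.2) m.
Proof. by rewrite Tstar_mul big_map; apply: eq_bigr => a _; rewrite big_map. Qed.

Lemma sun_coef0 l l' (p q : fn) : is_polyrep l p -> is_polyrep l' q ->
  Tstar C (tens_mul (lamL l) (lamL l')) 0%N = p * q.
Proof.
move=> Ep Eq; rewrite Tstar_LL.
under eq_bigr do under eq_bigr do rewrite (T_pure0 Csm C0 (sm_list_cat (@sm_lam_mono R n _) (@sm_lam_mono R n _))).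
rewrite Ep Eq; apply/funext => x.
rewrite fct_sumE mulrfctE /= mulr_suml; apply: eq_bigr => a _.
rewrite fct_sumE /= mulr_sumr; apply: eq_bigr => b _.
rewrite scalrfctE /= big_cat /= !prod_lam_mono.
have sE : forall u v : R, u *: v = u * v by [].
by rewrite sE mulrACA.
Qed.

Lemma smooth_LL (l l' : seq (R * mon)) m :
  smooth (Tstar C (tens_mul (lamL l) (lamL l')) m).
Proof.
rewrite Tstar_LL; apply: smooth_sum => a _; apply: smooth_sum => b _.
apply: smoothZ; apply: (smooth_T_pure Csm).
exact: sm_list_cat (@sm_lam_mono R n _) (@sm_lam_mono R n _).
Qed.

Definition rep (F : Defs.series R n) := xget [::] (fun l => is_polyrep l (F 0%N)).

Lemma sunE F G : sun C F G = Tstar C (tens_mul (lamL (rep F)) (lamL (rep G))).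
Proof. by []. Qed.

Lemma rep_ok F : N0 F -> is_polyrep (rep F) (F 0%N).
Proof. by case=> _ PF; exact: lam_rep. Qed.

Lemma sun0 F G : N0 F -> N0 G -> sun C F G 0%N = F 0%N * G 0%N.
Proof. by move=> NF NG; rewrite sunE; apply: sun_coef0; apply: rep_ok. Qed.

Lemma sun_N0 F G : N0 F -> N0 G -> N0 (sun C F G).
Proof.
move=> NF NG; split; first by move=> m; rewrite sunE; exact: smooth_LL.
rewrite sun0 //; exists (mulrep (rep F) (rep G)).
by apply: is_polyrep_mul; apply: rep_ok.
Qed.

Lemma sun_comm F G : sun C F G = sun C G F.
Proof. by rewrite !sunE Tstar_comm. Qed.

Lemma T3 (a b e : mon) :
  T_pure C (lam_mono R [ffun i => (b i + e i)%N] ++ lam_mono R a) =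
  T_pure C (lam_mono R [ffun i => (a i + b i)%N] ++ lam_mono R e).
Proof.
rewrite !lam_monoE -!map_cat.
rewrite (T_pure_perm C (@coordn R n) (t := nidx a ++ nidx b ++ nidx e)); last first.
  rewrite perm_catC; apply: perm_cat; first exact: perm_refl.
  exact: nidx_add.
rewrite [RHS](T_pure_perm C (@coordn R n) (t := nidx a ++ nidx b ++ nidx e)) //.
rewrite catA; apply: perm_cat; last exact: perm_refl.
exact: nidx_add.
Qed.

Lemma sun_assoc F G H : N0 F -> N0 G -> N0 H ->
  sun C F (sun C G H) = sun C (sun C F G) H.
Proof.
move=> NF NG NH.
have EGH : is_polyrep (rep (sun C G H)) (G 0%N * H 0%N).
  by rewrite -sun0 //; apply: rep_ok; apply: sun_N0.
have EFG : is_polyrep (rep (sun C F G)) (F 0%N * G 0%N).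
  by rewrite -sun0 //; apply: rep_ok; apply: sun_N0.
have MGH := is_polyrep_mul (rep_ok NG) (rep_ok NH).
have MFG := is_polyrep_mul (rep_ok NF) (rep_ok NG).
rewrite !sunE Tstar_comm (Tstar_WD C _ EGH MGH).
rewrite (Tstar_WD C _ EFG MFG).
apply/funext => m; rewrite !Tstar_LL /mulrep !big_allpairs_dep /=.
under eq_bigr do rewrite exchange_big /=.
rewrite exchange_big /=; apply: eq_bigr => a _.
apply: eq_bigr => b _; apply: eq_bigr => e _.
by rewrite T3 [X in X *: _ = _]mulrC mulrA.
Qed.

Lemma sun_lin_l (a b : R) F G H : N0 F -> N0 G -> N0 H ->
  sun C (sadd (sscale a F) (sscale b G)) H
    = sadd (sscale a (sun C F H)) (sscale b (sun C G H)).
Proof.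
move=> NF NG NH.
have PX : Pol ((sadd (sscale a F) (sscale b G)) 0%N).
  exists (addrep a b (rep F) (rep G)); exact: is_polyrep_add (rep_ok NF) (rep_ok NG).
have EX := lam_rep PX.
have AX := is_polyrep_add a b (rep_ok NF) (rep_ok NG).
rewrite sunE (Tstar_WD C _ EX AX).
apply/funext => m; rewrite /sadd /sscale !sunE !Tstar_lamL /addrep big_cat !big_map /=.
by congr (_ + _); rewrite scaler_sumr; apply: eq_bigr => c _; rewrite scalerA.
Qed.

End Sun.

Unset Implicit Arguments. Set Strict Implicit.
Local Close Scope classical_set_scope.

Theorem lemma1 (R : realType) (n : nat)
    (P : ('rV[R]_n -> R) -> ('rV[R]_n -> R) -> ('rV[R]_n -> R))
    (C : nat -> ('rV[R]_n -> R) -> ('rV[R]_n -> R) -> ('rV[R]_n -> R)) :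
  is_poisson P -> is_star_product P C ->
  [/\ (* sun is a product on N^0_nu *)
      (forall F G, N0 F -> N0 G -> N0 (sun C F G)),
      (* Abelian *)
      (forall F G, N0 F -> N0 G -> sun C F G = sun C G F),
      (* associative *)
      (forall F G H, N0 F -> N0 G -> N0 H ->
          sun C F (sun C G H) = sun C (sun C F G) H),
      (* R-bilinear *)
      (forall (a b : R) F G H, N0 F -> N0 G -> N0 H ->
          sun C (sadd (sscale a F) (sscale b G)) H
            = sadd (sscale a (sun C F H)) (sscale b (sun C G H)) /\
          sun C H (sadd (sscale a F) (sscale b G))
            = sadd (sscale a (sun C H F)) (sscale b (sun C H G))) &
      (* not R[[nu]]-bilinear *)
      ~ (forall (a b : nat -> R) F G H, N0 F -> N0 G -> N0 H ->
          sun C (sadd (smul a F) (smul b G)) H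
            = sadd (smul a (sun C F H)) (smul b (sun C G H)) /\
          sun C H (sadd (smul a F) (smul b G))
            = sadd (smul a (sun C H F)) (smul b (sun C H G)))].
Proof.
move=> _ [Csm [_ [_ [C0 _]]]].
split.
- by move=> F G; exact: sun_N0.
- by move=> F G _ _; exact: sun_comm.
- by move=> F G H; exact: sun_assoc.
- move=> a b F G H NF NG NH; split; first exact: sun_lin_l.
  rewrite sun_comm (sun_comm C H F) (sun_comm C H G).
  exact: sun_lin_l.
- move=> Hyp.
  pose one : Defs.series R n := cser (cst_fn 1).
  have Pone : is_polyrep [:: (1, [ffun=> 0%N])] (one 0%N).
    rewrite /is_polyrep /one /=; apply/funext => x.
    rewrite big_seq1 /= /monomial big1 ?mul1r // => i _.
    by rewrite ffunE expr0.
  have None : N0 one.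
    split; last by exists [:: (1, [ffun=> 0%N])].
    by move=> m; apply: smooth_cser; exact: smooth_cst.
  pose a := fun i : nat => ((i == 0%N) : nat)%:R : R.
  pose b := fun i : nat => ((i == 1%N) : nat)%:R : R.
  have [E _] := Hyp a b one one one None None None.
  pose X := sadd (smul a one) (smul b one).
  have EX : X 0%N = one 0%N.
    rewrite /X /sadd /smul !big_ord1 /a /b /= scale1r scale0r addr0.
    by [].
  have SX : sun C X one = sun C one one.
    by rewrite /sun /Defs.proj EX.
  rewrite -/X SX in E.
  have := congr1 (fun S => S 1%N) E.
  rewrite /sadd /smul !big_ord_recr !big_ord0 /= /a /b /=.
  rewrite !add0r scale1r !scale0r addr0 add0r scale1r.
  rewrite subn0 subnn => /eqP; rewrite -[X in X == _]addr0 (inj_eq (addrI _)) eq_sym => /eqP.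
  rewrite (sun0 Csm C0 None None) => /(congr1 (fun f => f 0)).
  rewrite /one /= mulrfctE /cst_fn mulr1 => /eqP; by rewrite oner_eq0.
Qed.
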